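(* Let $n\ge 3$, $m\ge 2$, and $F,R$ be as in the context. Suppose that for integers $a_{ij}$ ($1\le i<j-1\le n-2$), $b_i,c_i$ ($1\le i\le n-2$), $d_i$ ($1\le i\le n-3$) the element $$w=\prod_{i<j-1}[s_i,s_j]^{a_{ij}}\cdot\prod_i[s_i,s_{i+1},s_i]^{b_i}\cdot\prod_i[s_i,s_{i+1},s_is_{i+1}^{-1}]^{c_i}\cdot\prod_i[[s_i,s_{i+1}],[s_{i+1},s_{i+2}]]^{d_i}$$ lies in $[R,F]$. Then $m\mid a_{ij}$ for all $i,j$, $m\mid b_i$ and $\gcd\!\big(m,\binom{m}{2}\big)\mid c_i$ for all $i$, and $\gcd(2,m)\mid d_i$ for all $i$.
   Context: Commutator conventions: $[a,b]=a^{-1}b^{-1}ab$, $a^b=b^{-1}ab$, and commutators are left-normed: $[a_1,\dots,a_k]=[[a_1,\dots,a_{k-1}],a_k]$. Let $F$ be the free group on $s_1,\dots,s_{n-1}$ and let $R$ be the normal closure in $F$ of the following relators: $s_i^m$ ($1\le i\le n-1$); $[s_i,s_j]$ ($1\le i<j-1\le n-2$); $[s_i,s_{i+1},s_i]$ and $[s_i,s_{i+1},s_{i+1}]$ ($1\le i\le n-2$); $[[s_i,s_{i+1}],[s_{i+1},s_{i+2}]]$ ($1\le i\le n-3$). It is known that $F/R\cong \mathrm{UT}_n(\mathbb Z/m\mathbb Z)$ via $s_i\mapsto I+E_{i,i+1}$. *)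

(* Defs.v *)
(* Free group F on s_1..s_{n-1} modelled by words over
   letters (i, inverted?) with i in 1..n-1, modulo free reduction; subgroups
   are predicates on words closed under free insertion/deletion of x x^-1. *)
From HB Require Import structures.
From mathcomp Require Import all_boot all_order all_algebra.
Set Implicit Arguments. Unset Strict Implicit. Unset Printing Implicit Defensive.
Import GRing.Theory Num.Theory.

Definition letter := (nat * bool)%type.   (* (i, false) = s_i, (i, true) = s_i^-1 *)
Definition word := seq letter.
Definition linv (x : letter) : letter := (x.1, ~~ x.2).
Definition winv (w : word) : word := rev (map linv w).
Definition gen (i : nat) : word := [:: (i, false)].
Definition comm (u v : word) : word := winv u ++ winv v ++ u ++ v.
Definition wpow (w : word) (z : int) : word :=
  match z with
  | Posz k => flatten (nseq k w)
  | Negz k => flatten (nseq k.+1 (winv w))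
  end.
Definition letter_on (n : nat) (x : letter) : bool := (0 < x.1 < n)%N.
Definition word_on (n : nat) (w : word) : bool := all (letter_on n) w.

(* defining relators of UT_n(Z/mZ) *)
Definition is_relator (n m : nat) (r : word) : Prop :=
  (exists i, [/\ 1 <= i, i <= n - 1 & r = flatten (nseq m (gen i))]%N)
  \/ (exists i j, [/\ 1 <= i, i + 2 <= j, j <= n - 1 & r = comm (gen i) (gen j)]%N)
  \/ (exists i, [/\ 1 <= i, i <= n - 2 &
        (r = comm (comm (gen i) (gen i.+1)) (gen i)
         \/ r = comm (comm (gen i) (gen i.+1)) (gen i.+1))]%N)
  \/ (exists i, [/\ 1 <= i, i <= n - 3 &
        r = comm (comm (gen i) (gen i.+1)) (comm (gen i.+1) (gen i.+2))]%N).

(* membership in R = normal closure of the relators in F *)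
Inductive inR (n m : nat) : word -> Prop :=
| R_rel r : is_relator n m r -> inR n m r
| R_nil : inR n m [::]
| R_mul u v : inR n m u -> inR n m v -> inR n m (u ++ v)
| R_inv u : inR n m u -> inR n m (winv u)
| R_conj u g : word_on n g -> inR n m u -> inR n m (winv g ++ u ++ g)
| R_ins u v x : letter_on n x -> inR n m (u ++ v) -> inR n m (u ++ x :: linv x :: v)
| R_del u v x : inR n m (u ++ x :: linv x :: v) -> inR n m (u ++ v).

(* membership in [R,F] = subgroup generated by [r,f], r in R, f in F *)
Inductive inRF (n m : nat) : word -> Prop :=
| RF_gen r f : inR n m r -> word_on n f -> inRF n m (comm r f)
| RF_nil : inRF n m [::]
| RF_mul u v : inRF n m u -> inRF n m v -> inRF n m (u ++ v)
| RF_inv u : inRF n m u -> inRF n m (winv u)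
| RF_ins u v x : letter_on n x -> inRF n m (u ++ v) -> inRF n m (u ++ x :: linv x :: v)
| RF_del u v x : inRF n m (u ++ x :: linv x :: v) -> inRF n m (u ++ v).

(* the element w of the theorem; products taken in increasing (lexicographic) index order *)
Definition w_elem (n : nat) (a : nat -> nat -> int) (b c d : nat -> int) : word :=
  flatten [seq wpow (comm (gen i) (gen j)) (a i j)
          | i <- iota 1 (n - 2), j <- iota (i + 2) (n - (i + 2))]
  ++ flatten [seq wpow (comm (comm (gen i) (gen i.+1)) (gen i)) (b i) | i <- iota 1 (n - 2)]
  ++ flatten [seq wpow (comm (comm (gen i) (gen i.+1)) (gen i ++ winv (gen i.+1))) (c i)
             | i <- iota 1 (n - 2)]
  ++ flatten [seq wpow (comm (comm (gen i) (gen i.+1)) (comm (gen i.+1) (gen i.+2))) (d i)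
             | i <- iota 1 (n - 3)].

(* Main.v *)
Require Import Defs.
From mathcomp Require Import all_boot all_order all_algebra.
From mathcomp Require Import ring zify.
Set Implicit Arguments. Unset Strict Implicit. Unset Printing Implicit Defensive.
Import GRing.Theory.
Local Open Scope ring_scope.


Section UT.
Variable T : comRingType.
Record ut := UT { e12 : T; e13 : T; e14 : T; e15 : T; e23 : T; e24 : T; e25 : T;
                  e34 : T; e35 : T; e45 : T }.
Definition umul (a b : ut) : ut :=
  UT (e12 a + e12 b)
     (e13 a + e13 b + e12 a * e23 b)
     (e14 a + e14 b + e12 a * e24 b + e13 a * e34 b)
     (e15 a + e15 b + e12 a * e25 b + e13 a * e35 b + e14 a * e45 b)
     (e23 a + e23 b)
     (e24 a + e24 b + e23 a * e34 b)
     (e25 a + e25 b + e23 a * e35 b + e24 a * e45 b)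
     (e34 a + e34 b)
     (e35 a + e35 b + e34 a * e45 b)
     (e45 a + e45 b).
Definition uone : ut := UT 0 0 0 0 0 0 0 0 0 0.
Definition uinv (a : ut) : ut :=
  let b45 := - e45 a in
  let b34 := - e34 a in
  let b35 := - e35 a - e34 a * b45 in
  let b23 := - e23 a in
  let b24 := - e24 a - e23 a * b34 in
  let b25 := - e25 a - e23 a * b35 - e24 a * b45 in
  let b12 := - e12 a in
  let b13 := - e13 a - e12 a * b23 in
  let b14 := - e14 a - e12 a * b24 - e13 a * b34 in
  let b15 := - e15 a - e12 a * b25 - e13 a * b35 - e14 a * b45 in
  UT b12 b13 b14 b15 b23 b24 b25 b34 b35 b45.

Lemma umulA a b c : umul a (umul b c) = umul (umul a b) c.
Proof. case: a b c => ? ? ? ? ? ? ? ? ? ? [? ? ? ? ? ? ? ? ? ?] [? ? ? ? ? ? ? ? ? ?].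
rewrite /umul /=; congr UT; ring. Qed.
Lemma umul1g a : umul uone a = a.
Proof. case: a => *; rewrite /umul /=; congr UT; ring. Qed.
Lemma umulg1 a : umul a uone = a.
Proof. case: a => *; rewrite /umul /=; congr UT; ring. Qed.
Lemma umulVg a : umul (uinv a) a = uone.
Proof. case: a => *; rewrite /umul /uinv /=; congr UT; ring. Qed.
Lemma umulgV a : umul a (uinv a) = uone.
Proof. case: a => *; rewrite /umul /uinv /=; congr UT; ring. Qed.
End UT.

Lemma ut_eq (T : comRingType) (a b : ut T) :
  [&& e12 a == e12 b, e13 a == e13 b, e14 a == e14 b, e15 a == e15 b, e23 a == e23 b,
      e24 a == e24 b, e25 a == e25 b, e34 a == e34 b, e35 a == e35 b & e45 a == e45 b] -> a = b.
Proof. case: a b => ? ? ? ? ? ? ? ? ? ? [? ? ? ? ? ? ? ? ? ?] /=.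
by do 9! case/andP=> /eqP -> ; move=> /eqP ->. Qed.

Definition ucomm T (a b : ut T) := umul (uinv a) (umul (uinv b) (umul a b)).
Fixpoint upow T (a : ut T) (k : nat) : ut T :=
  if k is k'.+1 then umul a (upow a k') else uone T.

Section Gen.
Variable T : comRingType.
Implicit Types a b c : ut T.
Lemma uinvK a : uinv (uinv a) = a.
Proof. case: a => *; rewrite /uinv /=; congr UT; ring. Qed.
Lemma uinvM a b : uinv (umul a b) = umul (uinv b) (uinv a).
Proof. case: a b => ? ? ? ? ? ? ? ? ? ? [? ? ? ? ? ? ? ? ? ?].
rewrite /umul /uinv /=; congr UT; ring. Qed.
Lemma uinv1 : uinv (uone T) = uone T.
Proof. rewrite /uinv /uone /=; congr UT; ring. Qed.
Lemma ucomm1g a : ucomm (uone T) a = uone T.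
Proof. by rewrite /ucomm uinv1 !umul1g umulVg. Qed.
Lemma ucommg1 a : ucomm a (uone T) = uone T.
Proof. by rewrite /ucomm uinv1 !umul1g umulg1 umulVg. Qed.
Definition ucom a b := umul a b = umul b a.
Lemma ucomm_c a b : ucom a b -> ucomm a b = uone T.
Proof. by rewrite /ucomm => ->; rewrite [umul (uinv b) _]umulA umulVg umul1g umulVg. Qed.
Lemma ucom_inv a b : ucom a b -> ucom a (uinv b).
Proof.
move=> H; rewrite /ucom.
rewrite -{1}[a]umul1g -(umulVg b) -!umulA [umul b (umul a _)]umulA -H.
by rewrite -umulA umulgV umulg1.
Qed.
Lemma ucom_sym a b : ucom a b -> ucom b a.
Proof. by []. Qed.
Lemma ucom_mul a b c : ucom a c -> ucom b c -> ucom (umul a b) c.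
Proof. by rewrite /ucom => Ha Hb; rewrite -umulA Hb umulA Ha umulA. Qed.
Lemma ucom1 a : ucom a (uone T). Proof. by rewrite /ucom umulg1 umul1g. Qed.
End Gen.

Section Ev.
Variable T : comRingType.
Variable img : nat -> ut T.
Definition ltr (x : letter) := if x.2 then uinv (img x.1) else img x.1.
Fixpoint ev (w : word) : ut T := if w is x :: w' then umul (ltr x) (ev w') else uone T.

Lemma ev_cat u v : ev (u ++ v) = umul (ev u) (ev v).
Proof. elim: u => [|x u IH] /=; first by rewrite umul1g. by rewrite IH umulA. Qed.
Lemma ev_cons x w : ev (x :: w) = umul (ltr x) (ev w). Proof. by []. Qed.
Lemma ltr_linv x : ltr (linv x) = uinv (ltr x).
Proof. by case: x => i [] //=; rewrite /ltr /= uinvK. Qed.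
Lemma ev_ins u v x : ev (u ++ x :: linv x :: v) = ev (u ++ v).
Proof. by rewrite !ev_cat !ev_cons ltr_linv [umul (ltr x) _]umulA umulgV umul1g. Qed.
Lemma ev_winv w : ev (winv w) = uinv (ev w).
Proof.
elim: w => [|x w IH] /=; first by rewrite uinv1.
rewrite /winv map_cons rev_cons -cats1 ev_cat -/(winv w) IH /= umulg1 ltr_linv.
by rewrite uinvM.
Qed.
Lemma ev_gen i : ev (gen i) = img i.
Proof. by rewrite /= umulg1. Qed.
Lemma ev_comm u v : ev (comm u v) = ucomm (ev u) (ev v).
Proof. by rewrite /comm !ev_cat !ev_winv. Qed.
Lemma ev_nseq w k : ev (flatten (nseq k w)) = upow (ev w) k.
Proof. elim: k => [|k IH] //=. by rewrite ev_cat IH. Qed.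

Definition Cen g := forall k, ucom g (img k).
Lemma Cen_ltr g x : Cen g -> ucom g (ltr x).
Proof. by case: x => i [] H; rewrite /ltr /=; [apply: ucom_inv|]. Qed.
Lemma Cen_ev g w : Cen g -> ucom g (ev w).
Proof.
move=> H; elim: w => [|x w IH] /=; first exact: ucom1.
rewrite /ucom umulA (Cen_ltr x H) -umulA IH umulA. done.
Qed.
Lemma Cen_mul a b : Cen a -> Cen b -> Cen (umul a b).
Proof. by move=> Ha Hb k; apply: ucom_mul. Qed.
Lemma Cen_inv a : Cen a -> Cen (uinv a).
Proof. by move=> Ha k; apply: ucom_sym; apply: ucom_inv; apply: ucom_sym. Qed.
Lemma Cen_one : Cen (uone T).
Proof. by move=> k; rewrite /ucom umulg1 umul1g. Qed.

Variables (n m : nat).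
Lemma inR_Cen : (forall r, is_relator n m r -> Cen (ev r)) ->
  forall u, inR n m u -> Cen (ev u).
Proof.
move=> Hr u; elim=> {u} //.
- exact: Cen_one.
- by move=> u v _ Hu _ Hv; rewrite ev_cat; apply: Cen_mul.
- by move=> u _ Hu; rewrite ev_winv; apply: Cen_inv.
- move=> u g _ _ Hu; rewrite !ev_cat ev_winv.
  by rewrite (Cen_ev g Hu) umulA umulVg umul1g.
- by move=> u v x _ _; rewrite ev_ins.
- by move=> u v x _; rewrite ev_ins.
Qed.
Lemma inRF_one : (forall r, is_relator n m r -> Cen (ev r)) ->
  forall u, inRF n m u -> ev u = uone T.
Proof.
move=> Hr u; elim=> {u} //.
- move=> r f Hrr _; rewrite ev_comm; apply: ucomm_c; apply: Cen_ev.
  exact: inR_Cen Hrr.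
- by move=> u v _ Hu _ Hv; rewrite ev_cat Hu Hv umul1g.
- by move=> u _ Hu; rewrite ev_winv Hu uinv1.
- by move=> u v x _ _; rewrite ev_ins.
- by move=> u v x _; rewrite ev_ins.
Qed.

Lemma rel_Cen :
  (forall i, Cen (upow (img i) m)) ->
  (forall i j, (i + 2 <= j)%N -> Cen (ucomm (img i) (img j))) ->
  (forall i, Cen (ucomm (ucomm (img i) (img i.+1)) (img i))) ->
  (forall i, Cen (ucomm (ucomm (img i) (img i.+1)) (img i.+1))) ->
  (forall i, Cen (ucomm (ucomm (img i) (img i.+1)) (ucomm (img i.+1) (img i.+2)))) ->
  forall r, is_relator n m r -> Cen (ev r).
Proof.
move=> Hp Hc H3a H3b H4 r.
case=> [[i [_ _ ->]]|[[i [j [_ Hij _ ->]]]|[[i [_ _ [->|->]]]|[i [_ _ ->]]]]].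
- by rewrite ev_nseq ev_gen.
- by rewrite ev_comm !ev_gen; apply: Hc.
- by rewrite !ev_comm !ev_gen.
- by rewrite !ev_comm !ev_gen.
- by rewrite !ev_comm !ev_gen.
Qed.

Variable Z : int -> ut T.
Hypothesis ZD : forall a b, umul (Z a) (Z b) = Z (a + b).
Hypothesis Z0 : Z 0 = uone T.

Lemma upowZ c k : upow (Z c) k = Z (c * k%:Z).
Proof. elim: k => [|k IH] /=; first by rewrite mulr0 Z0. by rewrite IH ZD; congr Z; rewrite intS; ring. Qed.
Lemma uinvZ c : uinv (Z c) = Z (- c).
Proof.
by rewrite -[uinv _]umulg1 -Z0 -(subrr c) -ZD umulA umulVg umul1g.
Qed.

Lemma ev_wpowZ w c z : ev w = Z c -> ev (wpow w z) = Z (c * z).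
Proof.
move=> H; case: z => k; rewrite /wpow ev_nseq ?ev_winv H ?uinvZ upowZ //.
by congr Z; rewrite NegzE mulrN mulNr.
Qed.
Lemma ev_flat (A : eqType) (s : seq A) (G : A -> word) (g : A -> int) :
  (forall x, x \in s -> ev (G x) = Z (g x)) ->
  ev (flatten [seq G x | x <- s]) = Z (\sum_(x <- s) g x).
Proof.
elim: s => [|x s IH] H /=; first by rewrite big_nil Z0.
rewrite ev_cat H ?mem_head // IH ?big_cons ?ZD // => y ys.
by apply: H; rewrite in_cons ys orbT.
Qed.
Lemma flatten_flatten_map (A B : Type) (s : seq A) (H : A -> seq (seq B)) :
  flatten (flatten [seq H x | x <- s]) = flatten [seq flatten (H x) | x <- s].
Proof. by elim: s => //= x s IH; rewrite flatten_cat IH. Qed.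

Lemma ev_w (ka : nat -> nat -> int) (kb kc kd : nat -> int) a b c d :
 (forall i j, (i + 2 <= j)%N -> ucomm (img i) (img j) = Z (ka i j)) ->
 (forall i, ucomm (ucomm (img i) (img i.+1)) (img i) = Z (kb i)) ->
 (forall i, ucomm (ucomm (img i) (img i.+1)) (umul (img i) (uinv (img i.+1))) = Z (kc i)) ->
 (forall i, ucomm (ucomm (img i) (img i.+1)) (ucomm (img i.+1) (img i.+2)) = Z (kd i)) ->
 ev (w_elem n a b c d) =
 Z (\sum_(i <- iota 1 (n - 2)) \sum_(j <- iota (i + 2) (n - (i + 2))) (ka i j * a i j)
    + (\sum_(i <- iota 1 (n - 2)) (kb i * b i)
    + (\sum_(i <- iota 1 (n - 2)) (kc i * c i)
    + \sum_(i <- iota 1 (n - 3)) (kd i * d i)))).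
Proof.
move=> HA HB HC HD; rewrite /w_elem !ev_cat -!ZD.
congr umul; [|congr umul; [|congr umul]].
- rewrite flatten_flatten_map; apply: ev_flat => i _; apply: ev_flat => j.
  rewrite mem_iota => /andP[Hj _]; apply: ev_wpowZ.
  by rewrite ev_comm !ev_gen HA.
- apply: ev_flat => i _; apply: ev_wpowZ; by rewrite !ev_comm !ev_gen HB.
- apply: ev_flat => i _; apply: ev_wpowZ.
  by rewrite !ev_comm ev_cat ev_winv !ev_gen HC.
- apply: ev_flat => i _; apply: ev_wpowZ; by rewrite !ev_comm !ev_gen HD.
Qed.
End Ev.


Section Img3.
Variables (T : comRingType) (X Y W : ut T) (i0 : nat).
Definition img3 k := if k == i0 then X else if k == i0.+1 then Y
                     else if k == i0.+2 then W else uone T.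
Lemma img3_cases k : (k = i0 /\ img3 k = X) \/ (k = i0.+1 /\ img3 k = Y) \/
  (k = i0.+2 /\ img3 k = W) \/ (k <> i0 /\ k <> i0.+1 /\ k <> i0.+2 /\ img3 k = uone T).
Proof.
rewrite /img3; case: (k =P i0) => [->|h1]; first by left.
case: (k =P i0.+1) => [->|h2]; first by right; left.
case: (k =P i0.+2) => [->|h3]; first by right; right; left.
by right; right; right.
Qed.
Lemma Cen3 g : ucom g X -> ucom g Y -> ucom g W -> Cen img3 g.
Proof.
move=> hX hY hW k; case: (img3_cases k) => [[_ ->]|[[_ ->]|[[_ ->]|[_ [_ [_ ->]]]]]] //.
exact: ucom1.
Qed.
End Img3.

Section Img2.
Variables (T : comRingType) (X Y : ut T) (i0 j0 : nat).
Definition img2 k := if k == i0 then X else if k == j0 then Y else uone T.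
Lemma img2_cases k : (k = i0 /\ img2 k = X) \/ (k = j0 /\ k <> i0 /\ img2 k = Y) \/
  (k <> i0 /\ k <> j0 /\ img2 k = uone T).
Proof.
rewrite /img2; case: (k =P i0) => [->|h1]; first by left.
case: (k =P j0) => [E|h2]; first by subst k; right; left.
by right; right.
Qed.
Lemma Cen2 g : ucom g X -> ucom g Y -> Cen img2 g.
Proof.
move=> hX hY k; case: (img2_cases k) => [[_ ->]|[[_ [_ ->]]|[_ [_ ->]]]] //.
exact: ucom1.
Qed.
End Img2.

Ltac icase3 X Y W a k := case: (img3_cases X Y W a k) => [[? ->]|[[? ->]|[[? ->]|[? [? [? ->]]]]]].
Ltac icase2 X Y a b k := case: (img2_cases X Y a b k) => [[? ->]|[[? [? ->]]|[? [? ->]]]].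
Ltac dec := repeat match goal with |- context [(?a == ?b)] =>
    first [ rewrite (_ : (a == b) = true); [| by apply/eqP; lia]
          | rewrite (_ : (a == b) = false); [| by apply/negbTE/eqP; lia] ] end.

Lemma modeq (T : comRingType) (z1 z2 a b : T) (c1 c2 : int) :
  z1 = 0 -> z2 = 0 -> a - b = c1%:~R * z1 + c2%:~R * z2 -> a = b.
Proof. by move=> -> -> h; apply/eqP; rewrite -subr_eq0 h !mulr0 addr0. Qed.

Ltac mring h1 h2 := first [ ring
  | apply: (modeq (c1:=1) (c2:=0) h1 h2); ring
  | apply: (modeq (c1:=-1) (c2:=0) h1 h2); ring
  | apply: (modeq (c1:=0) (c2:=1) h1 h2); ring
  | apply: (modeq (c1:=0) (c2:=-1) h1 h2); ring
  | apply: (modeq (c1:=1) (c2:=1) h1 h2); ring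
  | apply: (modeq (c1:=1) (c2:=-1) h1 h2); ring
  | apply: (modeq (c1:=-1) (c2:=1) h1 h2); ring
  | apply: (modeq (c1:=-1) (c2:=-1) h1 h2); ring ].

Lemma upow_comm (T : comRingType) (a : ut T) k : ucom (upow a k) a.
Proof.
elim: k => [|k IH] /=; first by rewrite /ucom umulg1 umul1g.
by rewrite /ucom -umulA IH.
Qed.

Lemma upow4 (T : comRingType) (a : ut T) k :
  e15 a = 0 -> e25 a = 0 -> e35 a = 0 -> e45 a = 0 ->
  upow a k = UT (k%:R * e12 a) (k%:R * e13 a + 'C(k,2)%:R * e12 a * e23 a)
   (k%:R * e14 a + 'C(k,2)%:R * (e12 a * e24 a + e13 a * e34 a)
     + 'C(k,3)%:R * e12 a * e23 a * e34 a) 0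
   (k%:R * e23 a) (k%:R * e24 a + 'C(k,2)%:R * e23 a * e34 a) 0 (k%:R * e34 a) 0 0.
Proof.
case: a => a12 a13 a14 a15 a23 a24 a25 a34 a35 a45 /= -> -> -> ->.
elim: k => [|k IH]; first by rewrite [upow _ _]/= /uone; congr UT; rewrite ?bin0n ?mul0r ?addr0.
rewrite [upow _ _]/= IH /umul /= !binS bin1 !natrD; congr UT; rewrite ?mulr0 ?addr0 //; ring.
Qed.

Lemma Zp_dvd (M : nat) (k : int) : (1 < M)%N -> (k%:~R : 'Z_M) = 0 -> (M%:Z %| k)%Z.
Proof.
move=> hM; case: k => k.
  rewrite -[(Posz k)%:~R]/(k%:R) => h.
  have := val_Zp_nat hM k; rewrite h /= => /esym /eqP.
  by rewrite -/(dvdn M k) => hd; rewrite dvdzE.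
rewrite NegzE mulrNz => /eqP; rewrite oppr_eq0 => /eqP.
rewrite -[(Posz k.+1)%:~R]/(k.+1%:R) => h.
have := val_Zp_nat hM k.+1; rewrite h /= => /esym /eqP.
by rewrite -/(dvdn M k.+1) => hd; rewrite dvdzE abszN.
Qed.

Lemma upow1 (T : comRingType) k : upow (uone T) k = uone T.
Proof. by elim: k => //= k ->; rewrite umul1g. Qed.

Definition Z14 (T : comRingType) (k : int) : ut T := UT 0 0 k%:~R 0 0 0 0 0 0 0.
Definition Z15 (T : comRingType) (k : int) : ut T := UT 0 0 0 k%:~R 0 0 0 0 0 0.
Lemma Z14D (T : comRingType) a b : umul (Z14 T a) (Z14 T b) = Z14 T (a + b).
Proof. rewrite /umul /Z14 /=; congr UT; ring. Qed.
Lemma Z14_0 (T : comRingType) : Z14 T 0 = uone T.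
Proof. rewrite /Z14 /uone; congr UT; ring. Qed.
Lemma Z15D (T : comRingType) a b : umul (Z15 T a) (Z15 T b) = Z15 T (a + b).
Proof. rewrite /umul /Z15 /=; congr UT; ring. Qed.
Lemma Z15_0 (T : comRingType) : Z15 T 0 = uone T.
Proof. rewrite /Z15 /uone; congr UT; ring. Qed.
Lemma Z14_com (T : comRingType) k (g : ut T) : e45 g = 0 -> ucom (Z14 T k) g.
Proof. case: g => a12 a13 a14 a15 a23 a24 a25 a34 a35 a45 /= ->; rewrite /ucom /umul /Z14 /=; congr UT; ring. Qed.
Lemma Z15_com (T : comRingType) k (g : ut T) : ucom (Z15 T k) g.
Proof. case: g => /= ? ? ? ? ? ? ? ? ? ?; rewrite /ucom /umul /Z15 /=; congr UT; ring. Qed.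

Lemma sum0 (s : seq nat) (f : nat -> int) : \sum_(i <- s) (0 * f i) = 0.
Proof. by rewrite big1 // => i _; rewrite mul0r. Qed.
Lemma sum00 (s : seq nat) (t : nat -> seq nat) (f : nat -> nat -> int) :
  \sum_(i <- s) \sum_(j <- t i) (0 * f i j) = 0.
Proof. by rewrite big1 // => i _; rewrite sum0. Qed.
Lemma sum_pick (s : seq nat) i0 (F : nat -> int) v : uniq s -> i0 \in s ->
  (forall i, F i = if i == i0 then v else 0) -> \sum_(i <- s) F i = v.
Proof.
move=> us is0 HF; rewrite (bigD1_seq i0) //= HF eqxx big1 ?addr0 // => i /negbTE ni.
by rewrite HF ni.
Qed.


Section CaseBgen.
Variables (T : comRingType) (t : T).
Definition Yb : ut T := UT 1 t 0 0 2 0 0 0 0 0.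
Definition Xb : ut T := UT 1 t 0 0 2 0 0 1 0 0.
Lemma Zb : ucomm Xb Yb = (UT 0 0 (4 + - (t)) 0 0 ((-2)%:~R) 0 0 0 0 : ut T).
Proof.
have i1 : uinv Xb = (UT ((-1)%:~R) (2 + - (t)) ((-2)%:~R + t) 0 ((-2)%:~R) (2) 0 ((-1)%:~R) 0 0 : ut T) by cbv [uinv Xb Yb e12 e13 e14 e15 e23 e24 e25 e34 e35 e45]; congr UT; ring.
have i2 : uinv Yb = (UT ((-1)%:~R) (2 + - (t)) 0 0 ((-2)%:~R) 0 0 0 0 0 : ut T) by cbv [uinv Xb Yb e12 e13 e14 e15 e23 e24 e25 e34 e35 e45]; congr UT; ring.
have m1 : umul Xb Yb = (UT (2) (2 + 2 * t) 0 0 (4) 0 0 (1) 0 0 : ut T) by cbv [umul Xb Yb e12 e13 e14 e15 e23 e24 e25 e34 e35 e45]; congr UT; ring.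
have m2 : umul (UT ((-1)%:~R) (2 + - (t)) 0 0 ((-2)%:~R) 0 0 0 0 0 : ut T) (UT (2) (2 + 2 * t) 0 0 (4) 0 0 (1) 0 0 : ut T) = (UT (1) (t) (2 + - (t)) 0 (2) ((-2)%:~R) 0 (1) 0 0 : ut T) by cbv [umul e12 e13 e14 e15 e23 e24 e25 e34 e35 e45]; congr UT; ring.
have m3 : umul (UT ((-1)%:~R) (2 + - (t)) ((-2)%:~R + t) 0 ((-2)%:~R) (2) 0 ((-1)%:~R) 0 0 : ut T) (UT (1) (t) (2 + - (t)) 0 (2) ((-2)%:~R) 0 (1) 0 0 : ut T) = (UT 0 0 (4 + - (t)) 0 0 ((-2)%:~R) 0 0 0 0 : ut T) by cbv [umul e12 e13 e14 e15 e23 e24 e25 e34 e35 e45]; congr UT; ring.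
by rewrite /ucomm i1 i2 m1 m2 m3.
Qed.
Lemma Fb1' : ucomm (UT 0 0 (4 + - (t)) 0 0 ((-2)%:~R) 0 0 0 0 : ut T) Xb = Z14 T 2.
Proof.
have i1 : uinv (UT 0 0 (4 + - (t)) 0 0 ((-2)%:~R) 0 0 0 0 : ut T) = (UT 0 0 ((-4)%:~R + t) 0 0 (2) 0 0 0 0 : ut T) by cbv [uinv Xb Yb e12 e13 e14 e15 e23 e24 e25 e34 e35 e45]; congr UT; ring.
have i2 : uinv Xb = (UT ((-1)%:~R) (2 + - (t)) ((-2)%:~R + t) 0 ((-2)%:~R) (2) 0 ((-1)%:~R) 0 0 : ut T) by cbv [uinv Xb Yb e12 e13 e14 e15 e23 e24 e25 e34 e35 e45]; congr UT; ring.
have m1 : umul (UT 0 0 (4 + - (t)) 0 0 ((-2)%:~R) 0 0 0 0 : ut T) Xb = (UT (1) (t) (4 + - (t)) 0 (2) ((-2)%:~R) 0 (1) 0 0 : ut T) by cbv [umul Xb Yb e12 e13 e14 e15 e23 e24 e25 e34 e35 e45]; congr UT; ring.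
have m2 : umul (UT ((-1)%:~R) (2 + - (t)) ((-2)%:~R + t) 0 ((-2)%:~R) (2) 0 ((-1)%:~R) 0 0 : ut T) (UT (1) (t) (4 + - (t)) 0 (2) ((-2)%:~R) 0 (1) 0 0 : ut T) = (UT 0 0 (6 + - (t)) 0 0 ((-2)%:~R) 0 0 0 0 : ut T) by cbv [umul e12 e13 e14 e15 e23 e24 e25 e34 e35 e45]; congr UT; ring.
have m3 : umul (UT 0 0 ((-4)%:~R + t) 0 0 (2) 0 0 0 0 : ut T) (UT 0 0 (6 + - (t)) 0 0 ((-2)%:~R) 0 0 0 0 : ut T) = (UT 0 0 (2) 0 0 0 0 0 0 0 : ut T) by cbv [umul e12 e13 e14 e15 e23 e24 e25 e34 e35 e45]; congr UT; ring.
rewrite /ucomm i1 i2 m1 m2 m3.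
rewrite /Z14 /uone; congr UT; ring.
Qed.
Lemma Fb2' : ucomm (UT 0 0 (4 + - (t)) 0 0 ((-2)%:~R) 0 0 0 0 : ut T) Yb = Z14 T 2.
Proof.
have i1 : uinv (UT 0 0 (4 + - (t)) 0 0 ((-2)%:~R) 0 0 0 0 : ut T) = (UT 0 0 ((-4)%:~R + t) 0 0 (2) 0 0 0 0 : ut T) by cbv [uinv Xb Yb e12 e13 e14 e15 e23 e24 e25 e34 e35 e45]; congr UT; ring.
have i2 : uinv Yb = (UT ((-1)%:~R) (2 + - (t)) 0 0 ((-2)%:~R) 0 0 0 0 0 : ut T) by cbv [uinv Xb Yb e12 e13 e14 e15 e23 e24 e25 e34 e35 e45]; congr UT; ring.
have m1 : umul (UT 0 0 (4 + - (t)) 0 0 ((-2)%:~R) 0 0 0 0 : ut T) Yb = (UT (1) (t) (4 + - (t)) 0 (2) ((-2)%:~R) 0 0 0 0 : ut T) by cbv [umul Xb Yb e12 e13 e14 e15 e23 e24 e25 e34 e35 e45]; congr UT; ring.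
have m2 : umul (UT ((-1)%:~R) (2 + - (t)) 0 0 ((-2)%:~R) 0 0 0 0 0 : ut T) (UT (1) (t) (4 + - (t)) 0 (2) ((-2)%:~R) 0 0 0 0 : ut T) = (UT 0 0 (6 + - (t)) 0 0 ((-2)%:~R) 0 0 0 0 : ut T) by cbv [umul e12 e13 e14 e15 e23 e24 e25 e34 e35 e45]; congr UT; ring.
have m3 : umul (UT 0 0 ((-4)%:~R + t) 0 0 (2) 0 0 0 0 : ut T) (UT 0 0 (6 + - (t)) 0 0 ((-2)%:~R) 0 0 0 0 : ut T) = (UT 0 0 (2) 0 0 0 0 0 0 0 : ut T) by cbv [umul e12 e13 e14 e15 e23 e24 e25 e34 e35 e45]; congr UT; ring.
rewrite /ucomm i1 i2 m1 m2 m3.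
rewrite /Z14 /uone; congr UT; ring.
Qed.
Lemma XYb : umul Xb (uinv Yb) = (UT 0 0 0 0 0 0 0 (1) 0 0 : ut T).
Proof.
have i2 : uinv Yb = (UT ((-1)%:~R) (2 + - (t)) 0 0 ((-2)%:~R) 0 0 0 0 0 : ut T) by cbv [uinv Xb Yb e12 e13 e14 e15 e23 e24 e25 e34 e35 e45]; congr UT; ring.
rewrite i2; cbv [umul Xb Yb e12 e13 e14 e15 e23 e24 e25 e34 e35 e45]; congr UT; ring.
Qed.
Lemma Fb3' : ucomm (UT 0 0 (4 + - (t)) 0 0 ((-2)%:~R) 0 0 0 0 : ut T) (UT 0 0 0 0 0 0 0 (1) 0 0 : ut T) = uone T.
Proof.
have i1 : uinv (UT 0 0 (4 + - (t)) 0 0 ((-2)%:~R) 0 0 0 0 : ut T) = (UT 0 0 ((-4)%:~R + t) 0 0 (2) 0 0 0 0 : ut T) by cbv [uinv Xb Yb e12 e13 e14 e15 e23 e24 e25 e34 e35 e45]; congr UT; ring.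
have i2 : uinv (UT 0 0 0 0 0 0 0 (1) 0 0 : ut T) = (UT 0 0 0 0 0 0 0 ((-1)%:~R) 0 0 : ut T) by cbv [uinv Xb Yb e12 e13 e14 e15 e23 e24 e25 e34 e35 e45]; congr UT; ring.
have m1 : umul (UT 0 0 (4 + - (t)) 0 0 ((-2)%:~R) 0 0 0 0 : ut T) (UT 0 0 0 0 0 0 0 (1) 0 0 : ut T) = (UT 0 0 (4 + - (t)) 0 0 ((-2)%:~R) 0 (1) 0 0 : ut T) by cbv [umul Xb Yb e12 e13 e14 e15 e23 e24 e25 e34 e35 e45]; congr UT; ring.
have m2 : umul (UT 0 0 0 0 0 0 0 ((-1)%:~R) 0 0 : ut T) (UT 0 0 (4 + - (t)) 0 0 ((-2)%:~R) 0 (1) 0 0 : ut T) = (UT 0 0 (4 + - (t)) 0 0 ((-2)%:~R) 0 0 0 0 : ut T) by cbv [umul e12 e13 e14 e15 e23 e24 e25 e34 e35 e45]; congr UT; ring.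
have m3 : umul (UT 0 0 ((-4)%:~R + t) 0 0 (2) 0 0 0 0 : ut T) (UT 0 0 (4 + - (t)) 0 0 ((-2)%:~R) 0 0 0 0 : ut T) = (UT 0 0 0 0 0 0 0 0 0 0 : ut T) by cbv [umul e12 e13 e14 e15 e23 e24 e25 e34 e35 e45]; congr UT; ring.
rewrite /ucomm i1 i2 m1 m2 m3.
rewrite /Z14 /uone; congr UT; ring.
Qed.
Lemma Fb1 : ucomm (ucomm Xb Yb) Xb = Z14 T 2. Proof. by rewrite Zb Fb1'. Qed.
Lemma Fb2 : ucomm (ucomm Xb Yb) Yb = Z14 T 2. Proof. by rewrite Zb Fb2'. Qed.
Lemma Fb3 : ucomm (ucomm Xb Yb) (umul Xb (uinv Yb)) = uone T. Proof. by rewrite Zb XYb Fb3'. Qed.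
End CaseBgen.

Section CaseB.
Variable m : nat.
Hypothesis hm : (2 <= m)%N.
Local Notation T := ('Z_(m.*2)).
Let mu : T := m%:R.
Let C2 : T := 'C(m,2)%:R.
Lemma hb1 : 2%:R * mu = 0.
Proof. by rewrite /mu -natrM mul2n pchar_Zp // -addnn; lia. Qed.
Lemma hb2 : 2%:R * C2 - mu * (mu - 1) = 0.
Proof.
have e : (m%:R : T) = (m.-1)%:R + 1 by rewrite natr1 prednK //; lia.
have hc : (2 * 'C(m,2) = m * m.-1)%N by rewrite -[2%N]/(1.+1) mul_bin_left bin1 subn1 mulnC.
rewrite /C2 /mu -natrM hc natrM e; ring.
Qed.
Lemma Pb1 : ucom (upow (Xb (1 - mu)) m) (Yb (1 - mu)).
Proof.
rewrite upow4 // /ucom /umul /= -/mu -/C2; congr UT.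
all: mring hb1 hb2.
Qed.
Lemma Pb2 : ucom (upow (Yb (1 - mu)) m) (Xb (1 - mu)).
Proof.
rewrite upow4 // /ucom /umul /= -/mu -/C2; congr UT.
all: mring hb1 hb2.
Qed.

Variable i0 : nat.
Let X := Xb (1 - mu).
Let Y := Yb (1 - mu).
Let img := img3 X Y (uone T) i0.
Lemma CenZb k : Cen img (Z14 T k).
Proof. apply: Cen3; by [apply: Z14_com | apply: Z14_com | apply: ucom1]. Qed.
Ltac fin := rewrite ?ucomm1g ?ucommg1 ?ucomm1g ?Z14_0 ?Fb1 ?Fb2 ?Fb3.
Lemma vb_pair i j : (i + 2 <= j)%N -> ucomm (img i) (img j) = Z14 T 0.
Proof. move=> hij; rewrite /img; icase3 X Y (uone T) i0 i; icase3 X Y (uone T) i0 j; try (exfalso; lia); dec; fin; done. Qed.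
Lemma vb_3a i : ucomm (ucomm (img i) (img i.+1)) (img i) = Z14 T (if i == i0 then 2 else 0).
Proof. rewrite /img; icase3 X Y (uone T) i0 i; icase3 X Y (uone T) i0 i.+1; try (exfalso; lia); dec; fin; done. Qed.
Lemma vb_3b i : ucomm (ucomm (img i) (img i.+1)) (img i.+1) = Z14 T (if i == i0 then 2 else 0).
Proof. rewrite /img; icase3 X Y (uone T) i0 i; icase3 X Y (uone T) i0 i.+1; try (exfalso; lia); dec; fin; done. Qed.
Lemma vb_c i : ucomm (ucomm (img i) (img i.+1)) (umul (img i) (uinv (img i.+1))) = Z14 T 0.
Proof. rewrite /img; icase3 X Y (uone T) i0 i; icase3 X Y (uone T) i0 i.+1; try (exfalso; lia); dec; fin;
  rewrite ?uinv1 ?umulg1 ?umul1g ?ucomm1g ?ucommg1 ?Z14_0 //. Qed.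
Lemma vb_4 i : ucomm (ucomm (img i) (img i.+1)) (ucomm (img i.+1) (img i.+2)) = Z14 T 0.
Proof. rewrite /img; icase3 X Y (uone T) i0 i; icase3 X Y (uone T) i0 i.+1; icase3 X Y (uone T) i0 i.+2; try (exfalso; lia); dec; fin; done. Qed.
Lemma pb_cen i : Cen img (upow (img i) m).
Proof.
rewrite /img; icase3 X Y (uone T) i0 i.
- apply: Cen3; [exact: upow_comm | exact: Pb1 | exact: ucom1].
- apply: Cen3; [exact: Pb2 | exact: upow_comm | exact: ucom1].
- rewrite upow1; exact: Cen_one.
- rewrite upow1; exact: Cen_one.
Qed.

Lemma partB n a b c d : (1 <= i0)%N -> (i0 <= n - 2)%N ->
  inRF n m (w_elem n a b c d) -> (m%:Z %| b i0)%Z.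
Proof.
move=> h1 h2 H.
have Hr : forall r, is_relator n m r -> Cen img (ev img r).
  apply: rel_Cen => [i|i j hij|i|i|i].
  - exact: pb_cen.
  - rewrite vb_pair //; exact: CenZb.
  - rewrite vb_3a; exact: CenZb.
  - rewrite vb_3b; exact: CenZb.
  - rewrite vb_4; exact: CenZb.
have := inRF_one Hr H.
rewrite (@ev_w _ img n (Z14 T) (@Z14D T) (Z14_0 T) _ _ _ _ a b c d vb_pair vb_3a vb_c vb_4).
rewrite sum00 !sum0 !addr0 add0r.
rewrite (@sum_pick _ i0 _ (2 * b i0)); [| exact: iota_uniq | by rewrite mem_iota; lia |
  by move=> i; case: eqP => [->|_]; rewrite ?mul0r].
move=> /(congr1 (@e14 _)) /= /Zp_dvd.
have hm2 : (1 < m.*2)%N by lia.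
move=> /(_ hm2).
have -> : (m.*2)%:Z = 2 * m%:Z by rewrite -mul2n PoszM.
by rewrite dvdz_mul2l.
Qed.
End CaseB.


Section CaseC.
Variable m : nat.
Hypothesis hm : (2 <= m)%N.
Local Notation T := ('Z_m).
Let g := gcdn m 'C(m,2).
Let hh : int := (m %/ g)%:Z.
Definition Yc : ut T := UT hh%:~R 0 0 0 1 0 0 0 0 0.
Definition Xc : ut T := UT 0 0 0 0 0 0 0 1 0 0.
Lemma Zc : ucomm Xc Yc = (UT 0 0 (hh%:~R) 0 0 ((-1)%:~R) 0 0 0 0 : ut T).
Proof.
have i1 : uinv Xc = (UT 0 0 0 0 0 0 0 ((-1)%:~R) 0 0 : ut T) by cbv [uinv Xc Yc e12 e13 e14 e15 e23 e24 e25 e34 e35 e45]; congr UT; ring.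
have i2 : uinv Yc = (UT (- (hh%:~R)) (hh%:~R) 0 0 ((-1)%:~R) 0 0 0 0 0 : ut T) by cbv [uinv Xc Yc e12 e13 e14 e15 e23 e24 e25 e34 e35 e45]; congr UT; ring.
have m1 : umul Xc Yc = (UT (hh%:~R) 0 0 0 (1) 0 0 (1) 0 0 : ut T) by cbv [umul Xc Yc e12 e13 e14 e15 e23 e24 e25 e34 e35 e45]; congr UT; ring.
have m2 : umul (UT (- (hh%:~R)) (hh%:~R) 0 0 ((-1)%:~R) 0 0 0 0 0 : ut T) (UT (hh%:~R) 0 0 0 (1) 0 0 (1) 0 0 : ut T) = (UT 0 0 (hh%:~R) 0 0 ((-1)%:~R) 0 (1) 0 0 : ut T) by cbv [umul e12 e13 e14 e15 e23 e24 e25 e34 e35 e45]; congr UT; ring.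
have m3 : umul (UT 0 0 0 0 0 0 0 ((-1)%:~R) 0 0 : ut T) (UT 0 0 (hh%:~R) 0 0 ((-1)%:~R) 0 (1) 0 0 : ut T) = (UT 0 0 (hh%:~R) 0 0 ((-1)%:~R) 0 0 0 0 : ut T) by cbv [umul e12 e13 e14 e15 e23 e24 e25 e34 e35 e45]; congr UT; ring.
by rewrite /ucomm i1 i2 m1 m2 m3.
Qed.
Lemma Fc1' : ucomm (UT 0 0 (hh%:~R) 0 0 ((-1)%:~R) 0 0 0 0 : ut T) Xc = uone T.
Proof.
have i1 : uinv (UT 0 0 (hh%:~R) 0 0 ((-1)%:~R) 0 0 0 0 : ut T) = (UT 0 0 (- (hh%:~R)) 0 0 (1) 0 0 0 0 : ut T) by cbv [uinv Xc Yc e12 e13 e14 e15 e23 e24 e25 e34 e35 e45]; congr UT; ring.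
have i2 : uinv Xc = (UT 0 0 0 0 0 0 0 ((-1)%:~R) 0 0 : ut T) by cbv [uinv Xc Yc e12 e13 e14 e15 e23 e24 e25 e34 e35 e45]; congr UT; ring.
have m1 : umul (UT 0 0 (hh%:~R) 0 0 ((-1)%:~R) 0 0 0 0 : ut T) Xc = (UT 0 0 (hh%:~R) 0 0 ((-1)%:~R) 0 (1) 0 0 : ut T) by cbv [umul Xc Yc e12 e13 e14 e15 e23 e24 e25 e34 e35 e45]; congr UT; ring.
have m2 : umul (UT 0 0 0 0 0 0 0 ((-1)%:~R) 0 0 : ut T) (UT 0 0 (hh%:~R) 0 0 ((-1)%:~R) 0 (1) 0 0 : ut T) = (UT 0 0 (hh%:~R) 0 0 ((-1)%:~R) 0 0 0 0 : ut T) by cbv [umul e12 e13 e14 e15 e23 e24 e25 e34 e35 e45]; congr UT; ring.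
have m3 : umul (UT 0 0 (- (hh%:~R)) 0 0 (1) 0 0 0 0 : ut T) (UT 0 0 (hh%:~R) 0 0 ((-1)%:~R) 0 0 0 0 : ut T) = (UT 0 0 0 0 0 0 0 0 0 0 : ut T) by cbv [umul e12 e13 e14 e15 e23 e24 e25 e34 e35 e45]; congr UT; ring.
rewrite /ucomm i1 i2 m1 m2 m3.
rewrite /Z14 /uone; congr UT; ring.
Qed.
Lemma Fc2' : ucomm (UT 0 0 (hh%:~R) 0 0 ((-1)%:~R) 0 0 0 0 : ut T) Yc = Z14 T hh.
Proof.
have i1 : uinv (UT 0 0 (hh%:~R) 0 0 ((-1)%:~R) 0 0 0 0 : ut T) = (UT 0 0 (- (hh%:~R)) 0 0 (1) 0 0 0 0 : ut T) by cbv [uinv Xc Yc e12 e13 e14 e15 e23 e24 e25 e34 e35 e45]; congr UT; ring.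
have i2 : uinv Yc = (UT (- (hh%:~R)) (hh%:~R) 0 0 ((-1)%:~R) 0 0 0 0 0 : ut T) by cbv [uinv Xc Yc e12 e13 e14 e15 e23 e24 e25 e34 e35 e45]; congr UT; ring.
have m1 : umul (UT 0 0 (hh%:~R) 0 0 ((-1)%:~R) 0 0 0 0 : ut T) Yc = (UT (hh%:~R) 0 (hh%:~R) 0 (1) ((-1)%:~R) 0 0 0 0 : ut T) by cbv [umul Xc Yc e12 e13 e14 e15 e23 e24 e25 e34 e35 e45]; congr UT; ring.
have m2 : umul (UT (- (hh%:~R)) (hh%:~R) 0 0 ((-1)%:~R) 0 0 0 0 0 : ut T) (UT (hh%:~R) 0 (hh%:~R) 0 (1) ((-1)%:~R) 0 0 0 0 : ut T) = (UT 0 0 (2 * hh%:~R) 0 0 ((-1)%:~R) 0 0 0 0 : ut T) by cbv [umul e12 e13 e14 e15 e23 e24 e25 e34 e35 e45]; congr UT; ring.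
have m3 : umul (UT 0 0 (- (hh%:~R)) 0 0 (1) 0 0 0 0 : ut T) (UT 0 0 (2 * hh%:~R) 0 0 ((-1)%:~R) 0 0 0 0 : ut T) = (UT 0 0 (hh%:~R) 0 0 0 0 0 0 0 : ut T) by cbv [umul e12 e13 e14 e15 e23 e24 e25 e34 e35 e45]; congr UT; ring.
rewrite /ucomm i1 i2 m1 m2 m3.
rewrite /Z14 /uone; congr UT; ring.
Qed.
Lemma XYc : umul Xc (uinv Yc) = (UT (- (hh%:~R)) (hh%:~R) 0 0 ((-1)%:~R) 0 0 (1) 0 0 : ut T).
Proof.
have i2 : uinv Yc = (UT (- (hh%:~R)) (hh%:~R) 0 0 ((-1)%:~R) 0 0 0 0 0 : ut T) by cbv [uinv Xc Yc e12 e13 e14 e15 e23 e24 e25 e34 e35 e45]; congr UT; ring.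
rewrite i2; cbv [umul Xc Yc e12 e13 e14 e15 e23 e24 e25 e34 e35 e45]; congr UT; ring.
Qed.
Lemma Fc3' : ucomm (UT 0 0 (hh%:~R) 0 0 ((-1)%:~R) 0 0 0 0 : ut T) (UT (- (hh%:~R)) (hh%:~R) 0 0 ((-1)%:~R) 0 0 (1) 0 0 : ut T) = Z14 T (- hh).
Proof.
have i1 : uinv (UT 0 0 (hh%:~R) 0 0 ((-1)%:~R) 0 0 0 0 : ut T) = (UT 0 0 (- (hh%:~R)) 0 0 (1) 0 0 0 0 : ut T) by cbv [uinv Xc Yc e12 e13 e14 e15 e23 e24 e25 e34 e35 e45]; congr UT; ring.
have i2 : uinv (UT (- (hh%:~R)) (hh%:~R) 0 0 ((-1)%:~R) 0 0 (1) 0 0 : ut T) = (UT (hh%:~R) 0 0 0 (1) ((-1)%:~R) 0 ((-1)%:~R) 0 0 : ut T) by cbv [uinv Xc Yc e12 e13 e14 e15 e23 e24 e25 e34 e35 e45]; congr UT; ring.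
have m1 : umul (UT 0 0 (hh%:~R) 0 0 ((-1)%:~R) 0 0 0 0 : ut T) (UT (- (hh%:~R)) (hh%:~R) 0 0 ((-1)%:~R) 0 0 (1) 0 0 : ut T) = (UT (- (hh%:~R)) (hh%:~R) (hh%:~R) 0 ((-1)%:~R) ((-1)%:~R) 0 (1) 0 0 : ut T) by cbv [umul Xc Yc e12 e13 e14 e15 e23 e24 e25 e34 e35 e45]; congr UT; ring.
have m2 : umul (UT (hh%:~R) 0 0 0 (1) ((-1)%:~R) 0 ((-1)%:~R) 0 0 : ut T) (UT (- (hh%:~R)) (hh%:~R) (hh%:~R) 0 ((-1)%:~R) ((-1)%:~R) 0 (1) 0 0 : ut T) = (UT 0 0 0 0 0 ((-1)%:~R) 0 0 0 0 : ut T) by cbv [umul e12 e13 e14 e15 e23 e24 e25 e34 e35 e45]; congr UT; ring.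
have m3 : umul (UT 0 0 (- (hh%:~R)) 0 0 (1) 0 0 0 0 : ut T) (UT 0 0 0 0 0 ((-1)%:~R) 0 0 0 0 : ut T) = (UT 0 0 (- (hh%:~R)) 0 0 0 0 0 0 0 : ut T) by cbv [umul e12 e13 e14 e15 e23 e24 e25 e34 e35 e45]; congr UT; ring.
rewrite /ucomm i1 i2 m1 m2 m3.
rewrite /Z14 /uone; congr UT; ring.
Qed.
Lemma Fc1 : ucomm (ucomm Xc Yc) Xc = uone T. Proof. by rewrite Zc Fc1'. Qed.
Lemma Fc2 : ucomm (ucomm Xc Yc) Yc = Z14 T hh. Proof. by rewrite Zc Fc2'. Qed.
Lemma Fc3 : ucomm (ucomm Xc Yc) (umul Xc (uinv Yc)) = Z14 T (- hh). Proof. by rewrite Zc XYc Fc3'. Qed.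
Lemma hcm : (m%:R : T) = 0. Proof. by rewrite pchar_Zp //; lia. Qed.
Lemma hcC : ('C(m,2)%:R : T) * hh%:~R = 0.
Proof.
rewrite -[hh%:~R]/((m %/ g)%:R) -natrM.
have eC : ('C(m,2) = ('C(m,2) %/ g) * g)%N by rewrite divnK // dvdn_gcdr.
have em : (m = (m %/ g) * g)%N by rewrite divnK // dvdn_gcdl.
by rewrite {1}eC -mulnA [(g * _)%N]mulnC -em natrM hcm mulr0.
Qed.
Lemma Pc1 : upow Xc m = uone T.
Proof. by rewrite upow4 //= hcm /uone; congr UT; ring. Qed.
Lemma Pc2 : upow Yc m = uone T.
Proof. by rewrite upow4 //= hcm hcC /uone; congr UT; ring. Qed.

Variable i0 : nat.
Let img := img3 Xc Yc (uone T) i0.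
Lemma CenZc k : Cen img (Z14 T k).
Proof. apply: Cen3; by [apply: Z14_com | apply: Z14_com | apply: ucom1]. Qed.
Ltac fin := rewrite ?ucomm1g ?ucommg1 ?ucomm1g ?Z14_0 ?Fc1 ?Fc2 ?Fc3.
Lemma vc_pair i j : (i + 2 <= j)%N -> ucomm (img i) (img j) = Z14 T 0.
Proof. move=> hij; rewrite /img; icase3 Xc Yc (uone T) i0 i; icase3 Xc Yc (uone T) i0 j; try (exfalso; lia); dec; fin; done. Qed.
Lemma vc_3a i : ucomm (ucomm (img i) (img i.+1)) (img i) = Z14 T 0.
Proof. rewrite /img; icase3 Xc Yc (uone T) i0 i; icase3 Xc Yc (uone T) i0 i.+1; try (exfalso; lia); dec; fin; done. Qed.
Lemma vc_3b i : ucomm (ucomm (img i) (img i.+1)) (img i.+1) = Z14 T (if i == i0 then hh else 0).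
Proof. rewrite /img; icase3 Xc Yc (uone T) i0 i; icase3 Xc Yc (uone T) i0 i.+1; try (exfalso; lia); dec; fin; done. Qed.
Lemma vc_c i : ucomm (ucomm (img i) (img i.+1)) (umul (img i) (uinv (img i.+1))) =
  Z14 T (if i == i0 then - hh else 0).
Proof. rewrite /img; icase3 Xc Yc (uone T) i0 i; icase3 Xc Yc (uone T) i0 i.+1; try (exfalso; lia); dec; fin;
  rewrite ?uinv1 ?umulg1 ?umul1g ?ucomm1g ?ucommg1 ?Z14_0 //. Qed.
Lemma vc_4 i : ucomm (ucomm (img i) (img i.+1)) (ucomm (img i.+1) (img i.+2)) = Z14 T 0.
Proof. rewrite /img; icase3 Xc Yc (uone T) i0 i; icase3 Xc Yc (uone T) i0 i.+1; icase3 Xc Yc (uone T) i0 i.+2; try (exfalso; lia); dec; fin; done. Qed.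
Lemma pc_cen i : Cen img (upow (img i) m).
Proof.
rewrite /img; icase3 Xc Yc (uone T) i0 i; rewrite ?Pc1 ?Pc2 ?upow1; exact: Cen_one.
Qed.

Lemma partC n a b c d : (1 <= i0)%N -> (i0 <= n - 2)%N ->
  inRF n m (w_elem n a b c d) -> ((gcdn m 'C(m, 2))%:Z %| c i0)%Z.
Proof.
move=> h1 h2 H.
have Hr : forall r, is_relator n m r -> Cen img (ev img r).
  apply: rel_Cen => [i|i j hij|i|i|i].
  - exact: pc_cen.
  - rewrite vc_pair //; exact: CenZc.
  - rewrite vc_3a; exact: CenZc.
  - rewrite vc_3b; exact: CenZc.
  - rewrite vc_4; exact: CenZc.
have := inRF_one Hr H.
rewrite (@ev_w _ img n (Z14 T) (@Z14D T) (Z14_0 T) _ _ _ _ a b c d vc_pair vc_3a vc_c vc_4).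
rewrite sum00 !sum0 !addr0 !add0r.
rewrite (@sum_pick _ i0 _ (- hh * c i0)); [| exact: iota_uniq | by rewrite mem_iota; lia |
  by move=> i; case: eqP => [->|_]; rewrite ?mul0r].
move=> /(congr1 (@e14 _)) /= /Zp_dvd.
have hm2 : (1 < m)%N by lia.
move=> /(_ hm2).
rewrite dvdzE abszM abszN -abszM -dvdzE.
have gpos : (0 < g)%N by rewrite gcdn_gt0; lia.
have gm : (g <= m)%N by apply: dvdn_leq; [lia | exact: dvdn_gcdl].
have hpos : hh != 0 by rewrite /hh eqz_nat -lt0n divn_gt0.
have -> : (m%:Z) = g%:Z * hh by rewrite /hh -PoszM mulnC divnK // dvdn_gcdl.
by rewrite mulrC dvdz_mul2r.
Qed.
End CaseC.


Section CaseA.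
Variable m : nat.
Hypothesis hm : (2 <= m)%N.
Local Notation T := ('Z_m).
Definition Xa : ut T := UT 1 0 0 0 0 0 0 0 0 0.
Definition Ya : ut T := UT 0 0 0 0 0 1 0 0 0 0.
Lemma Fa1 : ucomm Xa Ya = Z14 T 1.
Proof.
have i1 : uinv Xa = (UT ((-1)%:~R) 0 0 0 0 0 0 0 0 0 : ut T) by cbv [uinv Xa Ya e12 e13 e14 e15 e23 e24 e25 e34 e35 e45]; congr UT; ring.
have i2 : uinv Ya = (UT 0 0 0 0 0 ((-1)%:~R) 0 0 0 0 : ut T) by cbv [uinv Xa Ya e12 e13 e14 e15 e23 e24 e25 e34 e35 e45]; congr UT; ring.
have m1 : umul Xa Ya = (UT (1) 0 (1) 0 0 (1) 0 0 0 0 : ut T) by cbv [umul Xa Ya e12 e13 e14 e15 e23 e24 e25 e34 e35 e45]; congr UT; ring.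
have m2 : umul (UT 0 0 0 0 0 ((-1)%:~R) 0 0 0 0 : ut T) (UT (1) 0 (1) 0 0 (1) 0 0 0 0 : ut T) = (UT (1) 0 (1) 0 0 0 0 0 0 0 : ut T) by cbv [umul e12 e13 e14 e15 e23 e24 e25 e34 e35 e45]; congr UT; ring.
have m3 : umul (UT ((-1)%:~R) 0 0 0 0 0 0 0 0 0 : ut T) (UT (1) 0 (1) 0 0 0 0 0 0 0 : ut T) = (UT 0 0 (1) 0 0 0 0 0 0 0 : ut T) by cbv [umul e12 e13 e14 e15 e23 e24 e25 e34 e35 e45]; congr UT; ring.
rewrite /ucomm i1 i2 m1 m2 m3.
rewrite /Z14 /uone; congr UT; ring.
Qed.
Lemma ham : (m%:R : T) = 0. Proof. by rewrite pchar_Zp //; lia. Qed.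
Lemma Pa1 : upow Xa m = uone T.
Proof. by rewrite upow4 //= ham /uone; congr UT; ring. Qed.
Lemma Pa2 : upow Ya m = uone T.
Proof. by rewrite upow4 //= ham /uone; congr UT; ring. Qed.
Variables i0 j0 : nat.
Hypothesis hij0 : (i0 + 2 <= j0)%N.
Let img := img2 Xa Ya i0 j0.
Lemma CenZa k : Cen img (Z14 T k).
Proof. apply: Cen2; by apply: Z14_com. Qed.
Ltac fin := rewrite ?ucomm1g ?ucommg1 ?ucomm1g ?Z14_0 ?Fa1.
Lemma va_pair i j : (i + 2 <= j)%N -> ucomm (img i) (img j) =
  Z14 T (if (i == i0) && (j == j0) then 1 else 0).
Proof. move=> hij; rewrite /img; icase2 Xa Ya i0 j0 i; icase2 Xa Ya i0 j0 j; try (exfalso; lia); dec; fin; done. Qed.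
Lemma va_3a i : ucomm (ucomm (img i) (img i.+1)) (img i) = Z14 T 0.
Proof. rewrite /img; icase2 Xa Ya i0 j0 i; icase2 Xa Ya i0 j0 i.+1; try (exfalso; lia); dec; fin; done. Qed.
Lemma va_3b i : ucomm (ucomm (img i) (img i.+1)) (img i.+1) = Z14 T 0.
Proof. rewrite /img; icase2 Xa Ya i0 j0 i; icase2 Xa Ya i0 j0 i.+1; try (exfalso; lia); dec; fin; done. Qed.
Lemma va_c i : ucomm (ucomm (img i) (img i.+1)) (umul (img i) (uinv (img i.+1))) = Z14 T 0.
Proof. rewrite /img; icase2 Xa Ya i0 j0 i; icase2 Xa Ya i0 j0 i.+1; try (exfalso; lia); dec; fin;
  rewrite ?uinv1 ?umulg1 ?umul1g ?ucomm1g ?ucommg1 ?Z14_0 //. Qed.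
Lemma va_4 i : ucomm (ucomm (img i) (img i.+1)) (ucomm (img i.+1) (img i.+2)) = Z14 T 0.
Proof. rewrite /img; icase2 Xa Ya i0 j0 i; icase2 Xa Ya i0 j0 i.+1; icase2 Xa Ya i0 j0 i.+2; try (exfalso; lia); dec; fin; done. Qed.
Lemma pa_cen i : Cen img (upow (img i) m).
Proof.
rewrite /img; icase2 Xa Ya i0 j0 i; rewrite ?Pa1 ?Pa2 ?upow1; exact: Cen_one.
Qed.

Lemma partA n a b c d : (1 <= i0)%N -> (j0 <= n - 1)%N ->
  inRF n m (w_elem n a b c d) -> (m%:Z %| a i0 j0)%Z.
Proof.
move=> h1 h2 H.
have Hr : forall r, is_relator n m r -> Cen img (ev img r).
  apply: rel_Cen => [i|i j hij|i|i|i].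
  - exact: pa_cen.
  - rewrite va_pair //; exact: CenZa.
  - rewrite va_3a; exact: CenZa.
  - rewrite va_3b; exact: CenZa.
  - rewrite va_4; exact: CenZa.
have := inRF_one Hr H.
rewrite (@ev_w _ img n (Z14 T) (@Z14D T) (Z14_0 T) _ _ _ _ a b c d va_pair va_3a va_c va_4).
rewrite !sum0 !addr0.
rewrite (@sum_pick _ i0 _ (a i0 j0)); [| exact: iota_uniq | by rewrite mem_iota; lia | ].
2: { move=> i; case: eqP => [->|ne]; last by rewrite big1 // => j _; rewrite andFb mul0r.
  rewrite (@sum_pick _ j0 _ (a i0 j0)); [done | exact: iota_uniq | by rewrite mem_iota; lia | ].
  by move=> j; rewrite ?eqxx andTb; case: eqP => [->|_]; rewrite ?mul1r ?mul0r. }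
move=> /(congr1 (@e14 _)) /= /Zp_dvd; apply; lia.
Qed.
End CaseA.

Section CaseD.
Local Notation T := ('Z_2).
Definition Xd : ut T := UT 0 0 0 0 0 0 0 0 0 1.
Definition Yd : ut T := UT 1 0 0 0 0 0 0 1 0 0.
Definition Wd : ut T := UT 0 0 0 0 1 0 0 0 0 0.
Ltac vmc := apply: ut_eq; vm_compute; reflexivity.
Lemma Fd0 : ucomm Xd Wd = uone T. Proof. vmc. Qed.
Lemma Fd1 : ucomm (ucomm Xd Yd) Xd = uone T. Proof. vmc. Qed.
Lemma Fd2 : ucomm (ucomm Xd Yd) Yd = uone T. Proof. vmc. Qed.
Lemma Fd3 : ucomm (ucomm Yd Wd) Yd = uone T. Proof. vmc. Qed.
Lemma Fd4 : ucomm (ucomm Yd Wd) Wd = uone T. Proof. vmc. Qed.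
Lemma Fd5 : ucomm (ucomm Xd Yd) (umul Xd (uinv Yd)) = uone T. Proof. vmc. Qed.
Lemma Fd6 : ucomm (ucomm Yd Wd) (umul Yd (uinv Wd)) = uone T. Proof. vmc. Qed.
Lemma Fd7 : ucomm (ucomm Xd Yd) (ucomm Yd Wd) = Z15 T 1. Proof. vmc. Qed.
Lemma upow_even (a : ut T) k : umul a a = uone T -> upow a (k.*2) = uone T.
Proof.
move=> h; elim: k => [|k IH]; first by [].
by rewrite doubleS [upow _ _]/= umulA h umul1g IH.
Qed.
Lemma Pd (m : nat) (a : ut T) : ~~ odd m -> umul a a = uone T -> upow a m = uone T.
Proof. by move=> em h; rewrite -(even_halfK em) upow_even. Qed.

Variable m : nat.
Hypothesis em : ~~ odd m.
Variable i0 : nat.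
Let img := img3 Xd Yd Wd i0.
Lemma CenZd k : Cen img (Z15 T k).
Proof. apply: Cen3; by apply: Z15_com. Qed.
Ltac fin := rewrite ?ucomm1g ?ucommg1 ?ucomm1g ?Z15_0 ?Fd0 ?Fd1 ?Fd2 ?Fd3 ?Fd4 ?Fd5 ?Fd6 ?Fd7.
Lemma vd_pair i j : (i + 2 <= j)%N -> ucomm (img i) (img j) = Z15 T 0.
Proof. move=> hij; rewrite /img; icase3 Xd Yd Wd i0 i; icase3 Xd Yd Wd i0 j; try (exfalso; lia); dec; fin; done. Qed.
Lemma vd_3a i : ucomm (ucomm (img i) (img i.+1)) (img i) = Z15 T 0.
Proof. rewrite /img; icase3 Xd Yd Wd i0 i; icase3 Xd Yd Wd i0 i.+1; try (exfalso; lia); dec; fin; done. Qed.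
Lemma vd_3b i : ucomm (ucomm (img i) (img i.+1)) (img i.+1) = Z15 T 0.
Proof. rewrite /img; icase3 Xd Yd Wd i0 i; icase3 Xd Yd Wd i0 i.+1; try (exfalso; lia); dec; fin; done. Qed.
Lemma vd_c i : ucomm (ucomm (img i) (img i.+1)) (umul (img i) (uinv (img i.+1))) = Z15 T 0.
Proof. rewrite /img; icase3 Xd Yd Wd i0 i; icase3 Xd Yd Wd i0 i.+1; try (exfalso; lia); dec; fin;
  rewrite ?uinv1 ?umulg1 ?umul1g ?ucomm1g ?ucommg1 ?Z15_0 //. Qed.
Lemma vd_4 i : ucomm (ucomm (img i) (img i.+1)) (ucomm (img i.+1) (img i.+2)) =
  Z15 T (if i == i0 then 1 else 0).
Proof. rewrite /img; icase3 Xd Yd Wd i0 i; icase3 Xd Yd Wd i0 i.+1; icase3 Xd Yd Wd i0 i.+2; try (exfalso; lia); dec; fin; done. Qed.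
Lemma pd_cen i : Cen img (upow (img i) m).
Proof.
rewrite /img; icase3 Xd Yd Wd i0 i; try (rewrite upow1; exact: Cen_one).
all: (rewrite (@Pd m _ em); [exact: Cen_one | vmc]).
Qed.

Lemma partD n a b c d : (1 <= i0)%N -> (i0 <= n - 3)%N ->
  inRF n m (w_elem n a b c d) -> (2%:Z %| d i0)%Z.
Proof.
move=> h1 h2 H.
have Hr : forall r, is_relator n m r -> Cen img (ev img r).
  apply: rel_Cen => [i|i j hij|i|i|i].
  - exact: pd_cen.
  - rewrite vd_pair //; exact: CenZd.
  - rewrite vd_3a; exact: CenZd.
  - rewrite vd_3b; exact: CenZd.
  - rewrite vd_4; exact: CenZd.
have := inRF_one Hr H.
rewrite (@ev_w _ img n (Z15 T) (@Z15D T) (Z15_0 T) _ _ _ _ a b c d vd_pair vd_3a vd_c vd_4).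
rewrite sum00 !sum0 !add0r.
rewrite (@sum_pick _ i0 _ (d i0)); [| exact: iota_uniq | by rewrite mem_iota; lia |
  by move=> i; case: eqP => [->|_]; rewrite ?mul1r ?mul0r].
by move=> /(congr1 (@e15 _)) /= /Zp_dvd; apply.
Qed.
End CaseD.


Close Scope ring_scope.
Unset Implicit Arguments.

Theorem mainTheorem3 (n m : nat) (a : nat -> nat -> int) (b c d : nat -> int) :
  (3 <= n)%N -> (2 <= m)%N -> inRF n m (w_elem n a b c d) ->
  [/\ (forall i j, (1 <= i)%N -> (i + 2 <= j)%N -> (j <= n - 1)%N -> (m%:Z %| a i j)%Z),
      (forall i, (1 <= i)%N -> (i <= n - 2)%N ->
         (m%:Z %| b i)%Z /\ ((gcdn m 'C(m, 2))%:Z %| c i)%Z)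
    & (forall i, (1 <= i)%N -> (i <= n - 3)%N -> ((gcdn 2 m)%:Z %| d i)%Z)].
Proof.
move=> hn hm H; split.
- move=> i j hi hij hj; exact: (@partA m hm i j hij n a b c d hi hj H).
- move=> i hi hi2; split.
  + exact: (@partB m hm i n a b c d hi hi2 H).
  + exact: (@partC m hm i n a b c d hi hi2 H).
- move=> i hi hi3; case: (boolP (odd m)) => om.
  + have -> : gcdn 2 m = 1%N by rewrite -gcdn_modr modn2 om.
    exact: dvd1z.
  + have -> : gcdn 2 m = 2%N by rewrite -gcdn_modr modn2 (negbTE om).
    exact: (@partD m om i n a b c d hi hi3 H).
Qed.
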